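(* Let $\lambda>0$. For every irrational $\alpha$, $\pm\lambda\in\sigma^{\mathcal{H}}$. Moreover, $\sigma^{\mathcal{H}}\cap(-\lambda,\lambda)\neq\emptyset$.
   Context: $\mathbb{T}=\mathbb{R}/\mathbb{Z}$, $\mathbb{T}_0=\{\theta\in\mathbb{T}:\cos 2\pi(n\alpha+\theta)\neq 0\ \forall n\in\mathbb{Z}\}$. For $\theta\in\mathbb{T}$, $n\in\mathbb{Z}$ put $v(\theta,n)=\cos2\pi((n-1)\alpha+\theta)$ if $n$ is odd and $v(\theta,n)=\cos 2\pi(n\alpha+\theta)$ if $n$ is even; $c(\theta,n)=\lambda$ if $n$ is odd and $c(\theta,n)=\cos2\pi(n\alpha+\theta)$ if $n$ is even. For $\theta\in\mathbb{T}_0$, $\mathcal{H}_\theta$ acts on $\ell^2(\mathbb{Z})$ by $(\mathcal{H}_\theta u)(n)=c(\theta,n)u(n+1)+c(\theta,n-1)u(n-1)+v(\theta,n)u(n)$; $\sigma^{\mathcal{H}}$ is its spectrum, independent of $\theta$. *)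

(* Defs.v *)
From Stdlib Require Import Reals ZArith Lra.
From Coquelicot Require Import Coquelicot.
Open Scope R_scope.

Definition irrational (a : R) : Prop :=
  forall p q : Z, q <> 0%Z -> a <> IZR p / IZR q.

(* theta in T_0 (theta taken as a real representative of R/Z;
   all quantities below are 1-periodic in theta) *)
Definition T0 (alpha theta : R) : Prop :=
  forall n : Z, cos (2 * PI * (IZR n * alpha + theta)) <> 0.

Definition vpot (alpha theta : R) (n : Z) : R :=
  if Z.odd n then cos (2 * PI * (IZR (n - 1) * alpha + theta))
  else cos (2 * PI * (IZR n * alpha + theta)).

Definition coef (lambda alpha theta : R) (n : Z) : R :=
  if Z.odd n then lambda else cos (2 * PI * (IZR n * alpha + theta)).

Definition Hop (lambda alpha theta : R) (u : Z -> R) (n : Z) : R :=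
  coef lambda alpha theta n * u (n + 1)%Z
  + coef lambda alpha theta (n - 1)%Z * u (n - 1)%Z
  + vpot alpha theta n * u n.

(* ell^2(Z): sum over Z of u(n)^2 written as a series over nat pairing n, -n-1 *)
Definition sq_terms (u : Z -> R) (k : nat) : R :=
  (u (Z.of_nat k))² + (u (- Z.of_nat k - 1)%Z)².

Definition l2 (u : Z -> R) : Prop := ex_series (sq_terms u).

Definition l2norm (u : Z -> R) : R := sqrt (Series (sq_terms u)).

Definition in_resolvent (A : (Z -> R) -> (Z -> R)) (E : R) : Prop :=
  exists G : (Z -> R) -> (Z -> R),
    (forall u, l2 u -> l2 (G u)) /\
    (exists C : R, forall u, l2 u -> l2norm (G u) <= C * l2norm u) /\
    (forall u, l2 u -> G (fun n => A u n - E * u n) = u) /\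
    (forall u, l2 u -> (fun n => A (G u) n - E * G u n) = u).

Definition in_spectrum (A : (Z -> R) -> (Z -> R)) (E : R) : Prop :=
  ~ in_resolvent A E.

(* Main.v *)
Require Import Defs.
From Stdlib Require Import Reals ZArith Lra Lia FunctionalExtensionality Classical.
From Coquelicot Require Import Coquelicot.
Open Scope R_scope.

Fixpoint zs (f : Z -> R) (a : Z) (len : nat) : R :=
  match len with O => 0 | S l => f a + zs f (a + 1)%Z l end.

Lemma zs_ext f g a len :
  (forall n, (a <= n < a + Z.of_nat len)%Z -> f n = g n) -> zs f a len = zs g a len.
Proof.
  revert a; induction len as [|l IH]; intros a H; simpl; [reflexivity|].
  rewrite (H a) by lia. rewrite (IH (a+1)%Z); [reflexivity|]. intros n Hn; apply H; lia.
Qed.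

Lemma zs_split f a n m : zs f a (n + m) = zs f a n + zs f (a + Z.of_nat n)%Z m.
Proof.
  revert a; induction n as [|n IH]; intros a; simpl.
  - rewrite Z.add_0_r; ring.
  - rewrite IH. replace (a + 1 + Z.of_nat n)%Z with (a + Z.pos (Pos.of_succ_nat n))%Z by lia. ring.
Qed.

Lemma zs_zero f a len : (forall n, (a <= n < a + Z.of_nat len)%Z -> f n = 0) -> zs f a len = 0.
Proof.
  intros H. rewrite (zs_ext f (fun _ => 0)) by exact H.
  clear H. revert a; induction len; intros; simpl; [reflexivity| rewrite IHlen; ring].
Qed.

Lemma zs_plus f g a len : zs (fun n => f n + g n) a len = zs f a len + zs g a len.
Proof. revert a; induction len; intros; simpl; [ring| rewrite IHlen; ring]. Qed.

Lemma zs_scal c f a len : zs (fun n => c * f n) a len = c * zs f a len.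
Proof. revert a; induction len; intros; simpl; [ring| rewrite IHlen; ring]. Qed.

Lemma zs_le f g a len : (forall n, f n <= g n) -> zs f a len <= zs g a len.
Proof. intros H; revert a; induction len; intros; simpl; [lra| specialize (IHlen (a+1)%Z); specialize (H a); lra]. Qed.

Lemma zs_shift f c a len : zs (fun n => f (n + c)%Z) a len = zs f (a + c)%Z len.
Proof.
  revert a; induction len; intros; simpl; [reflexivity|].
  rewrite IHlen. replace (a + 1 + c)%Z with (a + c + 1)%Z by lia. reflexivity.
Qed.

Lemma zs_window f p k a len :
  (forall n, (n < p \/ p + Z.of_nat k <= n)%Z -> f n = 0) ->
  (a <= p)%Z -> (p + Z.of_nat k <= a + Z.of_nat len)%Z ->
  zs f a len = zs f p k.
Proof.
  intros Hf H1 H2.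
  replace len with (Z.to_nat (p - a) + k + (len - Z.to_nat (p - a) - k))%nat by lia.
  rewrite !zs_split.
  rewrite (zs_zero f a (Z.to_nat (p-a))) by (intros; apply Hf; lia).
  rewrite (zs_zero f (a + Z.of_nat (Z.to_nat (p - a) + k))%Z) by (intros; apply Hf; lia).
  replace (a + Z.of_nat (Z.to_nat (p - a)))%Z with p by lia. ring.
Qed.

Definition supp (N : nat) (f : Z -> R) : Prop :=
  forall n, (n < - Z.of_nat N - 1 \/ Z.of_nat N < n)%Z -> f n = 0.

Definition zsN (f : Z -> R) (N : nat) : R := zs f (- Z.of_nat N - 1)%Z (2 * N + 2).

Lemma zsN_any f N a len : supp N f ->
  (a <= - Z.of_nat N - 1)%Z -> (Z.of_nat N + 1 <= a + Z.of_nat len)%Z ->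
  zs f a len = zsN f N.
Proof.
  intros Hs H1 H2. unfold zsN.
  assert (Hz : forall n, (n < - Z.of_nat N - 1 \/ - Z.of_nat N - 1 + Z.of_nat (2*N+2) <= n)%Z -> f n = 0)
    by (intros n Hn; apply Hs; lia).
  rewrite (zs_window f (- Z.of_nat N - 1) (2*N+2) a len Hz) by lia.
  reflexivity.
Qed.

Lemma supp_mono N M f : supp N f -> (N <= M)%nat -> supp M f.
Proof. intros H Hl n Hn; apply H; lia. Qed.

Lemma zsN_mono f N M : supp N f -> (N <= M)%nat -> zsN f M = zsN f N.
Proof. intros H Hl. unfold zsN at 1. apply zsN_any; auto; lia. Qed.

Definition pt (u v : Z -> R) (k : nat) : R :=
  u (Z.of_nat k) * v (Z.of_nat k) + u (- Z.of_nat k - 1)%Z * v (- Z.of_nat k - 1)%Z.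
Definition ip u v := Series (pt u v).

Lemma zs_S f a l : zs f a (S l) = f a + zs f (a + 1)%Z l.
Proof. reflexivity. Qed.

Lemma sum_SnR (a : nat -> R) n : @eq R (sum_n a (S n)) (sum_n a n + a (S n)).
Proof. rewrite sum_Sn; reflexivity. Qed.

Lemma sum_pt u v N : @eq R (sum_n (pt u v) N) (zsN (fun n => u n * v n) N).
Proof.
  induction N as [|N IH].
  - rewrite sum_O. unfold zsN, pt. simpl. ring.
  - rewrite sum_SnR, IH. unfold zsN.
    replace (2 * S N + 2)%nat with (S ((2 * N + 2) + 1))%nat by lia.
    rewrite zs_S, (zs_split _ _ (2 * N + 2) 1).
    replace (- Z.of_nat (S N) - 1 + 1)%Z with (- Z.of_nat N - 1)%Z by lia.
    replace (- Z.of_nat N - 1 + Z.of_nat (2 * N + 2))%Z with (Z.of_nat (S N)) by lia.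
    rewrite zs_S. unfold pt. cbn [zs]. ring.
Qed.

Lemma is_series_fin (a : nat -> R) N : (forall k, (N < k)%nat -> a k = 0) ->
  is_series a (sum_n a N).
Proof.
  intros H. unfold is_series.
  apply filterlim_ext_loc with (f := fun _ => sum_n a N); [|apply filterlim_const].
  exists N. intros n Hn. induction Hn; [reflexivity|].
  cbv beta in *. rewrite IHHn, sum_Sn, (H (S m)) by lia. exact (eq_sym (plus_zero_r _)).
Qed.

Lemma pt_zero u v N : supp N u -> forall k, (N < k)%nat -> pt u v k = 0.
Proof.
  intros H k Hk. unfold pt. rewrite !H by lia. ring.
Qed.

Lemma ip_win u v N : supp N u -> ip u v = zsN (fun n => u n * v n) N.
Proof.
  intros H. unfold ip. rewrite <- sum_pt. apply is_series_unique.
  apply is_series_fin. apply pt_zero; auto.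
Qed.

Lemma ex_series_fin u v N : supp N u -> ex_series (pt u v).
Proof.
  intros H. eexists. apply is_series_fin. intros k Hk; exact (pt_zero u v N H k Hk).
Qed.

Lemma ip_sym u v : ip u v = ip v u.
Proof. unfold ip. apply Series_ext. intros; unfold pt; ring. Qed.

Lemma ip_lin u v w x y N : supp N u ->
  ip u (fun n => x * v n + y * w n) = x * ip u v + y * ip u w.
Proof.
  intros H. rewrite !(ip_win u _ N H).
  unfold zsN. rewrite <- !zs_scal, <- zs_plus. apply zs_ext. intros; ring.
Qed.

Lemma zsN_nonneg f N : (forall n, 0 <= f n) -> 0 <= zsN f N.
Proof.
  intros H. unfold zsN. pose proof (zs_le (fun _ => 0) f (- Z.of_nat N - 1)%Z (2*N+2) H).
  rewrite zs_zero in H0 by auto. lra.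
Qed.

Lemma ip_nonneg u N : supp N u -> 0 <= ip u u.
Proof. intros H. rewrite (ip_win u u N H). apply zsN_nonneg. intros; nra. Qed.

Lemma l2_fin u N : supp N u -> l2 u.
Proof.
  intros H. unfold l2.
  assert (E : forall k, pt u u k = sq_terms u k) by (intros k; unfold pt, sq_terms, Rsqr; ring).
  apply ex_series_ext with (pt u u); [exact E|].
  eapply ex_series_fin; eauto.
Qed.

Lemma l2norm_ip u : l2norm u = sqrt (ip u u).
Proof. unfold l2norm, ip. f_equal. Qed.

Lemma weyl (A : (Z -> R) -> Z -> R) E :
  (forall eta, 0 < eta -> exists N u, supp N u /\ supp N (fun n => A u n - E * u n) /\
     0 < ip u u /\ ip (fun n => A u n - E * u n) (fun n => A u n - E * u n) <= eta * ip u u) ->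
  in_spectrum A E.
Proof.
  intros Hw [G [HG1 [[C HC] [HG3 HG4]]]].
  destruct (Hw (/ (C*C+1))) as [N [u [Hu [Hr [Hpos Hle]]]]].
  { apply Rinv_0_lt_compat; nra. }
  set (r := fun n => A u n - E * u n) in *.
  pose proof (HC r (l2_fin r N Hr)) as H1.
  pose proof (HG3 u (l2_fin u N Hu)) as H3. fold r in H3. rewrite H3 in H1.
  rewrite !l2norm_ip in H1.
  pose proof (ip_nonneg r N Hr) as Hr0.
  pose proof (sqrt_lt_R0 _ Hpos) as Hs.
  pose proof (sqrt_sqrt _ (Rlt_le _ _ Hpos)) as E1.
  pose proof (sqrt_sqrt _ Hr0) as E2.
  pose proof (sqrt_pos (ip r r)) as Hs2.
  assert (ip u u <= C * C * ip r r).
  { rewrite <- E1, <- E2. assert (0 < C * sqrt (ip r r)) by lra. nra. }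
  assert (C * C * ip r r <= C * C * (/ (C*C+1) * ip u u)).
  { apply Rmult_le_compat_l; nra. }
  assert (C * C * / (C * C + 1) < 1).
  { apply (Rmult_lt_reg_r (C*C+1)); [nra|]. rewrite Rmult_assoc, Rinv_l by nra. nra. }
  nra.
Qed.

Section H.
Variables (l a th : R).
Notation H := (Hop l a th).
Definition cc (m : Z) := cos (2 * PI * (IZR (2 * m) * a + th)).

Lemma coef_even m : coef l a th (2 * m) = cc m.
Proof. unfold coef, cc. rewrite Z.odd_even. reflexivity. Qed.
Lemma coef_odd m : coef l a th (2 * m + 1) = l.
Proof. unfold coef. rewrite Z.odd_odd. reflexivity. Qed.
Lemma vpot_even m : vpot a th (2 * m) = cc m.
Proof. unfold vpot, cc. rewrite Z.odd_even. reflexivity. Qed.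
Lemma vpot_odd m : vpot a th (2 * m + 1) = cc m.
Proof. unfold vpot, cc. rewrite Z.odd_odd. replace (2 * m + 1 - 1)%Z with (2 * m)%Z by lia. reflexivity. Qed.

Lemma Hop_even u m : H u (2 * m)%Z = cc m * u (2 * m + 1)%Z + l * u (2 * (m - 1) + 1)%Z + cc m * u (2 * m)%Z.
Proof.
  unfold Hop. rewrite coef_even, vpot_even.
  replace (2 * m - 1)%Z with (2 * (m - 1) + 1)%Z by lia. rewrite coef_odd. reflexivity.
Qed.

Lemma Hop_odd u m : H u (2 * m + 1)%Z = l * u (2 * (m + 1))%Z + cc m * u (2 * m)%Z + cc m * u (2 * m + 1)%Z.
Proof.
  unfold Hop. rewrite coef_odd, vpot_odd.
  replace (2 * m + 1 - 1)%Z with (2 * m)%Z by lia. rewrite coef_even.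
  replace (2 * m + 1 + 1)%Z with (2 * (m + 1))%Z by lia. ring.
Qed.

Lemma Hop_lin u v x y n : H (fun k => x * u k + y * v k) n = x * H u n + y * H v n.
Proof. unfold Hop. ring. Qed.

Lemma supp_Hop N u : supp N u -> supp (S N) (H u).
Proof. intros Hs n Hn. unfold Hop. rewrite !Hs by lia. ring. Qed.

Lemma supp_lin N u v x y : supp N u -> supp N v -> supp N (fun k => x * u k + y * v k).
Proof. intros H1 H2 n Hn. rewrite H1, H2 by lia. ring. Qed.

Lemma zsN_shift g N c : supp N g -> (c = 1 \/ c = -1)%Z ->
  zsN (fun n => g (n + c)%Z) (S N) = zsN g (S N).
Proof.
  intros Hg Hc. rewrite (zsN_mono g N (S N) Hg) by lia.
  unfold zsN at 1. rewrite zs_shift. apply zsN_any; auto; lia.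
Qed.

Lemma zsN_plus3 f g h N : zsN (fun n => f n + g n + h n) N = zsN f N + zsN g N + zsN h N.
Proof. unfold zsN. rewrite !zs_plus. reflexivity. Qed.

Lemma Hop_sym u v N : supp N u -> supp N v -> ip (H u) v = ip u (H v).
Proof.
  intros Hu Hv.
  rewrite (ip_win (H u) v (S N) (supp_Hop N u Hu)).
  rewrite (ip_win u (H v) N Hu).
  assert (Hsupp : supp N (fun n => u n * H v n)) by (intros n Hn; rewrite Hu by lia; ring).
  rewrite <- (zsN_mono _ N (S N) Hsupp) by lia.
  unfold Hop.
  transitivity (zsN (fun n => coef l a th n * u (n + 1)%Z * v n) (S N) +
                zsN (fun n => coef l a th (n - 1)%Z * u (n - 1)%Z * v n) (S N) +
                zsN (fun n => vpot a th n * u n * v n) (S N)).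
  { rewrite <- zsN_plus3. unfold zsN; apply zs_ext; intros; ring. }
  transitivity (zsN (fun n => u n * (coef l a th (n - 1)%Z * v (n - 1)%Z)) (S N) +
                zsN (fun n => u n * (coef l a th n * v (n + 1)%Z)) (S N) +
                zsN (fun n => u n * (vpot a th n * v n)) (S N)).
  2:{ rewrite <- zsN_plus3. unfold zsN; apply zs_ext; intros; ring. }
  f_equal; [f_equal|].
  - set (g := fun n => u n * (coef l a th (n - 1)%Z * v (n - 1)%Z)).
    assert (Hg : supp N g) by (intros n Hn; unfold g; rewrite Hu by lia; ring).
    rewrite <- (zsN_shift g N 1 Hg) by lia.
    unfold zsN; apply zs_ext; intros n _; unfold g.
    replace (n + 1 - 1)%Z with n by lia. ring.
  - set (g := fun n => u n * (coef l a th n * v (n + 1)%Z)).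
    assert (Hg : supp N g) by (intros n Hn; unfold g; rewrite Hu by lia; ring).
    rewrite <- (zsN_shift g N (-1) Hg) by lia.
    unfold zsN; apply zs_ext; intros n _; unfold g.
    replace (n + -1 + 1)%Z with n by lia. replace (n + -1)%Z with (n - 1)%Z by lia. ring.
  - unfold zsN; apply zs_ext; intros; ring.
Qed.

End H.

Definition P (y z : Z -> R) (n : Z) : R := if Z.odd n then z (Z.div2 n) else y (Z.div2 n).

Lemma P_even y z m : P y z (2 * m) = y m.
Proof.
  unfold P. rewrite Z.odd_even. f_equal.
  pose proof (Zdiv2_odd_eqn (2 * m)) as e. rewrite Z.odd_even in e. lia.
Qed.
Lemma P_odd y z m : P y z (2 * m + 1) = z m.
Proof.
  unfold P. rewrite Z.odd_odd. f_equal.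
  pose proof (Zdiv2_odd_eqn (2 * m + 1)) as e. rewrite Z.odd_odd in e. lia.
Qed.

Lemma HP_even l a th y z m :
  Hop l a th (P y z) (2 * m) = cc a th m * z m + l * z (m - 1)%Z + cc a th m * y m.
Proof. rewrite Hop_even, !P_odd, P_even. reflexivity. Qed.
Lemma HP_odd l a th y z m :
  Hop l a th (P y z) (2 * m + 1) = l * y (m + 1)%Z + cc a th m * y m + cc a th m * z m.
Proof. rewrite Hop_odd, !P_odd, !P_even. reflexivity. Qed.

Lemma zs_pairs f a k : zs f (2 * a) (2 * k) = zs (fun m => f (2 * m)%Z + f (2 * m + 1)%Z) a k.
Proof.
  revert a; induction k as [|k IH]; intros a; [reflexivity|].
  replace (2 * S k)%nat with (S (S (2 * k))) by lia.
  rewrite !zs_S. replace (2 * a + 1 + 1)%Z with (2 * (a + 1))%Z by lia.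
  rewrite IH. ring.
Qed.

Definition zind (p q n : Z) : R := if ((p <=? n)%Z && (n <? q)%Z)%bool then 1 else 0.

Lemma zs_ind p q a len : (a <= p)%Z -> (p <= q)%Z -> (q <= a + Z.of_nat len)%Z ->
  zs (zind p q) a len = IZR (q - p).
Proof.
  revert a p; induction len as [|len IH]; intros a p H1 H2 H3.
  - simpl. replace (q - p)%Z with 0%Z by lia. reflexivity.
  - rewrite zs_S. destruct (Z.eq_dec p q) as [->|Hpq].
    + rewrite zs_zero. 2:{ intros n _; unfold zind. destruct (Z.leb_spec q n), (Z.ltb_spec n q); simpl; auto; lia. }
      unfold zind. destruct (Z.leb_spec q a), (Z.ltb_spec a q); simpl; try lia; rewrite Z.sub_diag; ring.
    + destruct (Z.eq_dec a p) as [->|Hap].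
      * unfold zind at 1. destruct (Z.leb_spec p p), (Z.ltb_spec p q); simpl; try lia.
        rewrite (zs_ext _ (zind (p + 1) q)).
        2:{ intros n Hn. unfold zind. destruct (Z.leb_spec p n), (Z.leb_spec (p+1) n), (Z.ltb_spec n q); simpl; auto; lia. }
        rewrite IH by lia. replace (q - p)%Z with (q - (p + 1) + 1)%Z by lia. rewrite plus_IZR. ring.
      * unfold zind at 1. destruct (Z.leb_spec p a), (Z.ltb_spec a q); simpl; try lia.
        rewrite IH by lia. ring.
Qed.

Lemma zsN_ind p q N : (- Z.of_nat N - 1 <= p)%Z -> (p <= q)%Z -> (q <= Z.of_nat N + 1)%Z ->
  zsN (zind p q) N = IZR (q - p).
Proof. intros; unfold zsN; apply zs_ind; lia. Qed.

Lemma even_p1 m : Z.even (m + 1) = negb (Z.even m).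
Proof. rewrite Z.even_add. simpl. destruct (Z.even m); reflexivity. Qed.
Lemma even_m1 m : Z.even (m - 1) = negb (Z.even m).
Proof. rewrite Z.even_sub. simpl. destruct (Z.even m); reflexivity. Qed.

Definition sg (s : bool) : R := if s then 1 else -1.
Definition yv (s : bool) (L : nat) (m : Z) : R :=
  if ((0 <=? m)%Z && (m <? Z.of_nat L)%Z)%bool then (if Z.even m then 1 else - sg s) else 0.
Definition wv s L := P (yv s L) (fun m => - yv s L m).

Ltac dest := repeat (match goal with
 | |- context [Z.leb ?x ?y] => destruct (Z.leb_spec x y)
 | |- context [Z.ltb ?x ?y] => destruct (Z.ltb_spec x y)
 end; cbn [andb]; try (exfalso; lia)).

Lemma wv_sq s L n : wv s L n * wv s L n = zind 0 (2 * Z.of_nat L) n.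
Proof.
  destruct (Z.Even_or_Odd n) as [[m ->]|[m ->]]; unfold wv; [rewrite P_even|rewrite P_odd];
  unfold yv, zind; dest; destruct (Z.even m); destruct s; unfold sg; ring.
Qed.

Lemma res_sq l a th s L n : (1 <= L)%nat ->
  let r := fun n => Hop l a th (wv s L) n - sg s * l * wv s L n in
  r n * r n = l * l * (zind (-1) 1 n + zind (2 * Z.of_nat L - 1) (2 * Z.of_nat L + 1) n).
Proof.
  intros HL r. unfold r, wv.
  destruct (Z.Even_or_Odd n) as [[m ->]|[m ->]]; [rewrite HP_even, P_even|rewrite HP_odd, P_odd];
  unfold yv, zind; rewrite ?even_p1, ?even_m1; dest; destruct (Z.even m); destruct s; unfold sg; cbn [negb]; ring.
Qed.

Lemma coef_sq l a th n : coef l a th n * coef l a th n <= l * l + 1.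
Proof. unfold coef. destruct (Z.odd n); [nra|]. pose proof (COS_bound (2 * PI * (IZR n * a + th))). nra. Qed.
Lemma vpot_sq a th n : vpot a th n * vpot a th n <= 1.
Proof. unfold vpot. destruct (Z.odd n); match goal with |- cos ?x * _ <= _ => pose proof (COS_bound x) end; nra. Qed.

Lemma Hop_bound l a th z N : supp N z ->
  ip (Hop l a th z) (Hop l a th z) <= 9 * (l * l + 1) * ip z z.
Proof.
  intros Hz.
  rewrite (ip_win _ _ (S N) (supp_Hop l a th N z Hz)).
  rewrite (ip_win z z N Hz).
  set (g := fun n => z n * z n).
  assert (Hg : supp N g) by (intros n Hn; unfold g; rewrite Hz by lia; ring).
  rewrite <- (zsN_mono g N (S N) Hg) by lia.
  set (K := l * l + 1).
  apply Rle_trans with (zsN (fun n => 3 * K * g (n + 1)%Z + 3 * K * g (n + -1)%Z + 3 * K * g n) (S N)).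
  - unfold zsN. apply zs_le. intros n. unfold Hop, g.
    pose proof (coef_sq l a th n). pose proof (coef_sq l a th (n - 1)). pose proof (vpot_sq a th n).
    replace (n + -1)%Z with (n - 1)%Z by lia.
    set (c1 := coef l a th n) in *. set (c2 := coef l a th (n-1)) in *. set (v := vpot a th n) in *.
    set (x1 := z (n+1)%Z). set (x2 := z (n-1)%Z). set (x3 := z n).
    assert (c1 * x1 * (c1 * x1) <= K * (x1 * x1)) by (unfold K; nra).
    assert (c2 * x2 * (c2 * x2) <= K * (x2 * x2)) by (unfold K; nra).
    assert (v * x3 * (v * x3) <= K * (x3 * x3)) by (unfold K; nra).
    assert (HS : forall A B C : R, (A+B+C)*(A+B+C) <= 3*(A*A+B*B+C*C)).
    { intros A B C. pose proof (Rle_0_sqr (A-B)). pose proof (Rle_0_sqr (B-C)).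
      pose proof (Rle_0_sqr (A-C)). unfold Rsqr in *. nra. }
    specialize (HS (c1*x1) (c2*x2) (v*x3)). lra.
  - rewrite zsN_plus3. unfold zsN at 1 2 3. rewrite !zs_scal. fold (zsN (fun n => g (n + 1)%Z) (S N)).
    fold (zsN (fun n => g (n + -1)%Z) (S N)). fold (zsN g (S N)).
    rewrite (zsN_shift g N 1 Hg), (zsN_shift g N (-1) Hg) by lia. lra.
Qed.

Lemma nat_unbounded x : exists n : nat, (1 <= n)%nat /\ x <= INR n.
Proof.
  destruct (archimed (Rabs x)) as [H1 _].
  assert (0 <= up (Rabs x))%Z by (apply le_IZR; pose proof (Rabs_pos x); lra).
  exists (S (Z.to_nat (up (Rabs x)))). split; [lia|].
  rewrite S_INR, INR_IZR_INZ, Z2Nat.id by lia.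
  pose proof (Rle_abs x). lra.
Qed.

Lemma sq_zero x : x * x = 0 -> x = 0.
Proof. intros H. nra. Qed.

Lemma spec_pm l a th s : 0 < l -> in_spectrum (Hop l a th) (sg s * l).
Proof.
  intros Hl. apply weyl. intros eta Heta.
  destruct (nat_unbounded (2 * l * l / eta)) as [L [HL1 HL2]].
  exists (2 * L + 1)%nat, (wv s L).
  assert (Sw : supp (2 * L + 1) (wv s L)).
  { intros n Hn. apply sq_zero. rewrite wv_sq. unfold zind.
    destruct (Z.leb_spec 0 n), (Z.ltb_spec n (2 * Z.of_nat L)); cbn [andb]; try reflexivity; lia. }
  split; [exact Sw|].
  split.
  { intros n Hn. apply sq_zero. rewrite (res_sq l a th s L n HL1). unfold zind.
    destruct (Z.leb_spec (-1) n), (Z.ltb_spec n 1), (Z.leb_spec (2 * Z.of_nat L - 1) n),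
      (Z.ltb_spec n (2 * Z.of_nat L + 1)); cbn [andb]; try ring; lia. }
  rewrite (ip_win _ _ _ Sw).
  rewrite (ip_win (fun n => Hop l a th (wv s L) n - sg s * l * wv s L n) _ (2 * L + 1)).
  2:{ intros n Hn. apply sq_zero. rewrite (res_sq l a th s L n HL1). unfold zind.
    destruct (Z.leb_spec (-1) n), (Z.ltb_spec n 1), (Z.leb_spec (2 * Z.of_nat L - 1) n),
      (Z.ltb_spec n (2 * Z.of_nat L + 1)); cbn [andb]; try ring; lia. }
  unfold zsN. rewrite (zs_ext _ (zind 0 (2 * Z.of_nat L))) by (intros; apply wv_sq).
  rewrite (zs_ext (fun n => (Hop l a th (wv s L) n - sg s * l * wv s L n) * (Hop l a th (wv s L) n - sg s * l * wv s L n)) (fun n => l * l * (zind (-1) 1 n + zind (2 * Z.of_nat L - 1) (2 * Z.of_nat L + 1) n)))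
    by (intros; apply (res_sq l a th s L _ HL1)).
  rewrite zs_scal, zs_plus, !zs_ind by lia.
  replace (2 * Z.of_nat L - 0)%Z with (2 * Z.of_nat L)%Z by lia.
  replace (1 - -1)%Z with 2%Z by lia.
  replace (2 * Z.of_nat L + 1 - (2 * Z.of_nat L - 1))%Z with 2%Z by lia.
  rewrite mult_IZR, <- INR_IZR_INZ.
  assert (1 <= INR L) by (apply (le_INR 1); lia).
  split; [simpl; lra|].
  apply Rmult_le_reg_r with (/ eta); [apply Rinv_0_lt_compat; lra|].
  replace (eta * (2 * INR L) * / eta) with (2 * INR L) by (field; lra).
  unfold Rdiv in HL2. simpl IZR. nra.
Qed.

Lemma explicit_w l a th : 0 < l -> cc a th 1 <> 0 ->
  exists u N, supp N u /\ 0 < ip u u /\ ip (Hop l a th u) (Hop l a th u) < l * l * ip u u.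
Proof.
  intros Hl Hc.
  set (c := cc a th 1) in *.
  set (t := l / (4 * c)).
  set (y0 := fun m : Z => if Z.eqb m 0 then 1 else if Z.eqb m 1 then t else 0).
  set (z0 := fun m : Z => if Z.eqb m 0 then -1 else if Z.eqb m 1 then t else 0).
  assert (Sw : supp 3 (P y0 z0)).
  { intros n Hn. unfold P. pose proof (Zdiv2_odd_eqn n) as e.
    unfold y0, z0. destruct (Z.odd n);
    destruct (Z.eqb_spec (Z.div2 n) 0); try lia; destruct (Z.eqb_spec (Z.div2 n) 1); try lia; reflexivity. }
  exists (P y0 z0), 3%nat. split; [exact Sw|].
  assert (Iw : ip (P y0 z0) (P y0 z0) = 2 + 2 * t * t).
  { rewrite (ip_win _ _ _ Sw). unfold zsN.
    replace (- Z.of_nat 3 - 1)%Z with (2 * -2)%Z by reflexivity.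
    replace (2 * 3 + 2)%nat with (2 * 4)%nat by reflexivity.
    rewrite zs_pairs.
    rewrite (zs_ext _ (fun m => y0 m * y0 m + z0 m * z0 m)) by (intros; rewrite P_even, P_odd; reflexivity).
    unfold y0, z0. simpl. ring. }
  assert (Ih : ip (Hop l a th (P y0 z0)) (Hop l a th (P y0 z0)) =
               2 * l * l - 4 * t * c * l + t * t * (2 * l * l + 8 * c * c)).
  { rewrite (ip_win _ _ _ (supp_Hop l a th 3 _ Sw)).
    assert (Sp : supp 4 (fun n => Hop l a th (P y0 z0) n * Hop l a th (P y0 z0) n)).
    { intros n Hn. rewrite (supp_Hop l a th 3 _ Sw n) by lia. ring. }
    rewrite <- (zsN_any _ 4 (2 * -3) (2 * 6) Sp) by lia.
    rewrite zs_pairs.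
    rewrite (zs_ext _ (fun m => (cc a th m * z0 m + l * z0 (m - 1)%Z + cc a th m * y0 m) *
                                 (cc a th m * z0 m + l * z0 (m - 1)%Z + cc a th m * y0 m) +
                                 (l * y0 (m + 1)%Z + cc a th m * y0 m + cc a th m * z0 m) *
                                 (l * y0 (m + 1)%Z + cc a th m * y0 m + cc a th m * z0 m)))
      by (intros; rewrite HP_even, HP_odd; reflexivity).
    unfold y0, z0. simpl. fold c. ring. }
  rewrite Iw, Ih. split; [nra|].
  assert (E : 2 * l * l - 4 * t * c * l + t * t * (2 * l * l + 8 * c * c) - l * l * (2 + 2 * t * t)
              = - (l * l) / 2).
  { unfold t. field. auto. }
  assert (0 < l * l / 2) by (unfold Rdiv; apply Rmult_lt_0_compat; [nra|lra]).
  unfold Rdiv in *. lra.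
Qed.

Definition Wv (A : (Z -> R) -> Z -> R) (E eta : R) : Prop :=
  exists N u, supp N u /\ supp N (fun n => A u n - E * u n) /\
     0 < ip u u /\ ip (fun n => A u n - E * u n) (fun n => A u n - E * u n) <= eta * ip u u.

Lemma Wv_mono A E e1 e2 : Wv A E e1 -> e1 <= e2 -> Wv A E e2.
Proof.
  intros [N [u [H1 [H2 [H3 H4]]]]] He. exists N, u. repeat split; auto. nra.
Qed.

Lemma ip_expand f g s N : supp N f -> supp N g ->
  ip (fun n => f n + s * g n) (fun n => f n + s * g n) = ip f f + 2 * s * ip f g + s * s * ip g g.
Proof.
  intros Hf Hg.
  assert (Hfg : supp N (fun n => f n + s * g n)) by (intros n Hn; rewrite Hf, Hg by lia; ring).
  rewrite (ip_win _ _ _ Hfg), (ip_win f f N Hf), (ip_win f g N Hf), (ip_win g g N Hg).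
  unfold zsN. rewrite <- !zs_scal, <- !zs_plus. apply zs_ext. intros; ring.
Qed.

Section Inf.
Variables (l a th : R).
Hypothesis Hl : 0 < l.
Hypothesis Hc : cc a th 1 <> 0.
Notation HH := (Hop l a th).

Definition Sset (x : R) : Prop :=
  exists u N, supp N u /\ 0 < ip u u /\ x = - (ip (HH u) (HH u) / ip u u).

Lemma Hsupp_ip u N : supp N u -> 0 <= ip (HH u) (HH u).
Proof. intros Hu. apply (ip_nonneg _ (S N)). apply supp_Hop; auto. Qed.

Lemma inf_exists : exists nu, 0 <= nu < l * l /\
  (forall u N, supp N u -> nu * ip u u <= ip (HH u) (HH u)) /\
  (forall eps, 0 < eps -> exists u N, supp N u /\ 0 < ip u u /\ ip (HH u) (HH u) <= (nu + eps) * ip u u).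
Proof.
  assert (Hb : bound Sset).
  { exists 0. intros x [u [N [Hu [Hp ->]]]]. pose proof (Hsupp_ip u N Hu).
    assert (0 <= ip (HH u) (HH u) / ip u u) by (apply Rdiv_le_0_compat; lra). lra. }
  destruct (explicit_w l a th Hl Hc) as [w [Nw [Sw [Pw Lw]]]].
  assert (Hne : exists x, Sset x) by (eexists; exists w, Nw; repeat split; eauto).
  destruct (completeness Sset Hb Hne) as [m [Hub Hlub]].
  exists (- m).
  assert (Rm : forall u N, supp N u -> 0 < ip u u -> - m * ip u u <= ip (HH u) (HH u)).
  { intros u N Hu Hp. assert (H0 : Sset (- (ip (HH u) (HH u) / ip u u))) by (exists u, N; auto).
    apply Hub in H0. apply Rmult_le_reg_r with (/ ip u u); [apply Rinv_0_lt_compat; lra|].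
    rewrite Rmult_assoc, Rinv_r by lra. unfold Rdiv in H0. lra. }
  split; [split|split].
  - assert (m <= 0).
    { apply Hlub. intros x [u [N [Hu [Hp ->]]]]. pose proof (Hsupp_ip u N Hu).
      assert (0 <= ip (HH u) (HH u) / ip u u) by (apply Rdiv_le_0_compat; lra). lra. }
    lra.
  - pose proof (Rm w Nw Sw Pw). nra.
  - intros u N Hu. destruct (Rle_lt_or_eq_dec 0 (ip u u) (ip_nonneg u N Hu)) as [Hp|Hz].
    + apply Rm with N; auto.
    + rewrite <- Hz. pose proof (Hsupp_ip u N Hu). lra.
  - intros eps Heps. apply NNPP. intros Hno.
    assert (m <= m - eps); [|lra].
    apply Hlub. intros x [u [N [Hu [Hp ->]]]].
    assert (ip (HH u) (HH u) > (- m + eps) * ip u u).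
    { apply Rnot_le_lt. intros Hle. apply Hno. exists u, N; auto. }
    assert (ip (HH u) (HH u) / ip u u > - m + eps).
    { apply Rmult_gt_reg_r with (ip u u); auto. unfold Rdiv. rewrite Rmult_assoc, Rinv_l by lra. lra. }
    lra.
Qed.

Lemma two_sided : exists mu, 0 <= mu < l /\ forall eta, 0 < eta -> Wv HH mu eta \/ Wv HH (- mu) eta.
Proof.
  destruct inf_exists as [nu [[Hnu0 Hnul] [Hinf Happ]]].
  exists (sqrt nu).
  pose proof (sqrt_pos nu). pose proof (sqrt_sqrt nu Hnu0) as Hsq.
  split; [split; [lra| nra]|].
  intros eta Heta.
  set (M := 9 * (l * l + 1)).
  assert (HM : 0 < M) by (unfold M; nra).
  destruct (Happ (eta * eta / M)) as [u [N [Hu [Hp Hle]]]].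
  { unfold Rdiv. apply Rmult_lt_0_compat; [nra| apply Rinv_0_lt_compat; lra]. }
  set (mu := sqrt nu) in *.
  set (z := fun n => 1 * HH (HH u) n + (- nu) * u n).
  set (N2 := S (S N)).
  assert (Su : supp N2 u) by (apply supp_mono with N; auto; unfold N2; lia).
  assert (SHu : supp N2 (HH u)) by (apply supp_mono with (S N); [apply supp_Hop; auto| unfold N2; lia]).
  assert (SHHu : supp N2 (HH (HH u))) by (apply supp_Hop, supp_Hop; auto).
  assert (Sz : supp N2 z) by (apply supp_lin; auto).
  assert (HZ : ip z z <= eta * eta * ip u u).
  { set (s := - / M).
    pose proof (Hinf (fun n => u n + s * z n) N2) as Hv.
    assert (Sv : supp N2 (fun n => u n + s * z n)) by (intros n Hn; rewrite Su, Sz by lia; ring).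
    specialize (Hv Sv).
    rewrite (ip_expand u z s N2 Su Sz) in Hv.
    assert (Hlin : HH (fun n => u n + s * z n) = fun n => HH u n + s * HH z n).
    { apply functional_extensionality; intros n; unfold Hop; ring. }
    rewrite Hlin in Hv.
    assert (SHz : supp (S N2) (HH z)) by (apply supp_Hop; auto).
    assert (SHu' : supp (S N2) (HH u)) by (apply supp_mono with N2; auto).
    rewrite (ip_expand (HH u) (HH z) s (S N2) SHu' SHz) in Hv.
    rewrite <- (Hop_sym l a th (HH u) z N2 SHu Sz) in Hv.
    assert (Ezz : ip z z = ip (HH (HH u)) z - nu * ip u z).
    { unfold z at 2. rewrite (ip_lin z (HH (HH u)) u 1 (- nu) N2 Sz). rewrite (ip_sym z (HH (HH u))), (ip_sym z u). fold z. ring. }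
    pose proof (Hop_bound l a th z N2 Sz) as Hbd. fold M in Hbd.
    pose proof (ip_nonneg z N2 Sz) as Hz0.
    assert (Hss : s * s = / M * / M) by (unfold s; ring).
    assert (Hs : 2 * s = - 2 * / M) by (unfold s; ring).
    assert (HiM : 0 < / M) by (apply Rinv_0_lt_compat; lra).
    assert (A1 : nu * (ip u u + 2 * s * ip u z + s * s * ip z z) <=
                 ip (HH u) (HH u) + 2 * s * (ip (HH (HH u)) z) + s * s * ip (HH z) (HH z)) by exact Hv.
    assert (A2 : ip (HH u) (HH u) <= (nu + eta * eta / M) * ip u u) by exact Hle.
    assert (A3 : s * s * ip (HH z) (HH z) <= / M * / M * (M * ip z z)).
    { rewrite Hss. apply Rmult_le_compat_l; [nra|exact Hbd]. }
    assert (A4 : / M * / M * (M * ip z z) = / M * ip z z) by (field; lra).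
    assert (A5 : 0 <= nu * (s * s * ip z z)) by (apply Rmult_le_pos; [lra| rewrite Hss; nra]).
    assert (A6 : ip z z * / M <= eta * eta / M * ip u u).
    { assert (H2 : 0 <= ip (HH u) (HH u) - nu * ip u u + 2 * s * ip z z + s * s * ip (HH z) (HH z) - nu * s * s * ip z z) by (rewrite Ezz; nra).
      rewrite Hs in H2. nra. }
    unfold Rdiv in A6. apply Rmult_le_reg_r with (/ M); [exact HiM|]. nra. }
  set (x := fun n => HH u n + mu * u n).
  assert (Sx : supp N2 x) by (intros n Hn; unfold x; rewrite SHu, Su by lia; ring).
  destruct (Rle_or_lt (eta * ip u u) (ip x x)) as [Big|Small].
  - left. exists (S N2), x.
    assert (Er : (fun n => HH x n - mu * x n) = z).
    { apply functional_extensionality; intros n. unfold z, x, Hop. rewrite <- Hsq. fold mu. ring. }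
    rewrite Er. repeat split.
    + apply supp_mono with N2; auto.
    + apply supp_mono with N2; auto.
    + nra.
    + nra.
  - right. exists N2, u.
    assert (Er : (fun n => HH u n - - mu * u n) = x).
    { apply functional_extensionality; intros n. unfold x. ring. }
    rewrite Er. repeat split; auto. lra.
Qed.

End Inf.

Theorem corollary3p5 (lambda alpha : R) :
  0 < lambda -> irrational alpha ->
  forall theta : R, T0 alpha theta ->
    in_spectrum (Hop lambda alpha theta) lambda /\
    in_spectrum (Hop lambda alpha theta) (- lambda) /\
    (exists E : R, - lambda < E < lambda /\ in_spectrum (Hop lambda alpha theta) E).
Proof.
  intros Hl _ theta HT0.
  split.
  { pose proof (spec_pm lambda alpha theta true Hl) as Hs. unfold sg in Hs.
    rewrite Rmult_1_l in Hs. exact Hs. }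
  split.
  { pose proof (spec_pm lambda alpha theta false Hl) as Hs. unfold sg in Hs.
    replace (-1 * lambda) with (- lambda) in Hs by ring. exact Hs. }
  assert (Hc : cc alpha theta 1 <> 0) by exact (HT0 2%Z).
  destruct (two_sided lambda alpha theta Hl Hc) as [mu [[Hm0 Hml] Hall]].
  destruct (classic (forall eta, 0 < eta -> Wv (Hop lambda alpha theta) mu eta)) as [Hp|Hn].
  - exists mu. split; [lra|]. apply weyl. exact Hp.
  - exists (- mu). split; [lra|]. apply weyl.
    apply not_all_ex_not in Hn. destruct Hn as [e0 He0].
    apply imply_to_and in He0. destruct He0 as [He0 Hne].
    intros eta Heta.
    destruct (Hall (Rmin eta e0)) as [W|W].
    + apply Rmin_glb_lt; auto.
    + exfalso. apply Hne. apply Wv_mono with (Rmin eta e0); auto. apply Rmin_r.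
    + apply Wv_mono with (Rmin eta e0); auto. apply Rmin_l.
Qed.
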